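(* Consider the optimization problem (P) defined in the context. There exists an optimal solution $(\boldsymbol\tau,\boldsymbol\varphi,\mathbf e)$ of (P) in which the source node uses all of its harvested energy, i.e. $e_1=\zeta P_t h_1\tau_0$.
   Context: Parameters: integer $K\ge1$, $T>0$, $W>0$, $\zeta\in(0,1]$, $P_t>0$, $I_p>0$, and for $k=1,\dots,K$: $h_k>0$, $f_k>0$, $\gamma_k>0$, $B_k^b>0$. Variables: $\boldsymbol\tau=(\tau_0,\tau_1,\dots,\tau_K)$, $\boldsymbol\varphi=(\varphi_1,\dots,\varphi_K)$, $\mathbf e=(e_1,\dots,e_K)$. Rate of node $k$: $R_k(\tau_k,\varphi_k,e_k)=\varphi_k W\log_2(1+\frac{e_k}{\varphi_k}\gamma_k)+(\tau_k-\varphi_k)B_k^b$ if $\varphi_k>0$, and $R_k=\tau_kB_k^b$ if $\varphi_k=0$. Problem (P): maximize $R(\boldsymbol\tau,\boldsymbol\varphi,\mathbf e)=\min_{1\le k\le K}R_k(\tau_k,\varphi_k,e_k)$ subject to: $\sum_{k=0}^K\tau_k\le T$; $0\le\tau_0$; $0\le\varphi_k\le\tau_k\le T$ for $k=1,\dots,K$; $0\le e_k\le \zeta P_t h_k\sum_{i=0}^{k-1}\tau_i$ for $k=1,\dots,K$ (harvested-energy constraint); $e_k\le \frac{I_p}{f_k}\varphi_k$ for $k=1,\dots,K$ (interference constraint). *)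

(* Defs.v *)
From Stdlib Require Import Reals Lra.
Open Scope R_scope.

Definition log2 (x : R) : R := ln x / ln 2.

Definition rate (W gam B tau phi e : R) : R :=
  if Rlt_dec 0 phi then phi * W * log2 (1 + e / phi * gam) + (tau - phi) * B
  else tau * B.

Fixpoint psum (f : nat -> R) (n : nat) : R :=
  match n with
  | O => 0
  | S m => psum f m + f m
  end.

(* min_{1 <= k <= n} f k  (for n >= 1; value f 1 when n = 0, never used) *)
Fixpoint minR1 (f : nat -> R) (n : nat) : R :=
  match n with
  | O => f 1%nat
  | S O => f 1%nat
  | S m => Rmin (minR1 f m) (f n)
  end.

Definition objective (K : nat) (W : R) (gam B : nat -> R)
  (tau phi e : nat -> R) : R :=
  minR1 (fun k => rate W (gam k) (B k) (tau k) (phi k) (e k)) K.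

(* Feasible set of (P).  tau : indices 0..K, phi, e : indices 1..K
   (values outside these ranges are irrelevant). *)
Definition feasible (K : nat) (T zeta Pt Ip : R) (h f : nat -> R)
  (tau phi e : nat -> R) : Prop :=
  psum tau (S K) <= T /\
  0 <= tau 0%nat /\
  (forall k : nat, (1 <= k <= K)%nat ->
     0 <= phi k /\ phi k <= tau k /\ tau k <= T /\
     0 <= e k /\
     e k <= zeta * Pt * h k * psum tau k /\
     e k <= Ip / f k * phi k).

Definition optimal (K : nat) (T W zeta Pt Ip : R) (h f gam B : nat -> R)
  (tau phi e : nat -> R) : Prop :=
  feasible K T zeta Pt Ip h f tau phi e /\
  forall tau' phi' e' : nat -> R,
    feasible K T zeta Pt Ip h f tau' phi' e' ->
    objective K W gam B tau' phi' e' <= objective K W gam B tau phi e.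

(* Main.v *)
Require Import Defs.
From Stdlib Require Import Reals Lra Lia.
Open Scope R_scope.

Lemma psum_ext (f g : nat -> R) n :
  (forall i, (i < n)%nat -> f i = g i) -> psum f n = psum g n.
Proof.
induction n as [|n IH]; intros H; simpl; [reflexivity|].
rewrite IH by (intros; apply H; lia). rewrite H by lia. reflexivity.
Qed.

Lemma psum_nonneg (f : nat -> R) n :
  (forall i, (i < n)%nat -> 0 <= f i) -> 0 <= psum f n.
Proof.
induction n as [|n IH]; intros H; simpl; [lra|].
assert (0 <= f n) by (apply H; lia).
assert (0 <= psum f n) by (apply IH; intros; apply H; lia). lra.
Qed.

Lemma psum_ge_term (f : nat -> R) n i :
  (forall i, (i < n)%nat -> 0 <= f i) -> (i < n)%nat -> f i <= psum f n.
Proof.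
induction n as [|n IH]; intros H Hi; [lia|]. simpl.
destruct (Nat.eq_dec i n) as [->|Hne].
- assert (0 <= psum f n) by (apply psum_nonneg; intros; apply H; lia). lra.
- assert (f i <= psum f n) by (apply IH; [intros; apply H; lia| lia]).
  assert (0 <= f n) by (apply H; lia). lra.
Qed.

Lemma psum_mono (f : nat -> R) m n :
  (forall i, (i < n)%nat -> 0 <= f i) -> (m <= n)%nat -> psum f m <= psum f n.
Proof.
intros H Hmn. induction Hmn as [|n Hmn IH]; [lra|]. simpl.
assert (0 <= f n) by (apply H; lia).
assert (psum f m <= psum f n) by (apply IH; intros; apply H; lia). lra.
Qed.

Lemma minR1_mono (f g : nat -> R) n :
  (1 <= n)%nat -> (forall k, (1 <= k <= n)%nat -> f k <= g k) ->
  minR1 f n <= minR1 g n.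
Proof.
induction n as [|n IH]; intros Hn H; [lia|].
destruct n as [|n].
- simpl. apply H; lia.
- change (Rmin (minR1 f (S n)) (f (S (S n))) <= Rmin (minR1 g (S n)) (g (S (S n)))).
  assert (minR1 f (S n) <= minR1 g (S n)) by (apply IH; [lia| intros; apply H; lia]).
  assert (f (S (S n)) <= g (S (S n))) by (apply H; lia).
  unfold Rmin. repeat destruct Rle_dec; lra.
Qed.

Lemma minR1_ext (f g : nat -> R) n :
  (1 <= n)%nat -> (forall k, (1 <= k <= n)%nat -> f k = g k) ->
  minR1 f n = minR1 g n.
Proof.
intros Hn H. apply Rle_antisym; apply minR1_mono; auto; intros k Hk; rewrite H; lra || auto.
Qed.

Lemma rate_mono_tau W g Bk tau tau' phi e :
  0 < Bk -> tau <= tau' -> rate W g Bk tau phi e <= rate W g Bk tau' phi e.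
Proof.
intros HB Ht. unfold rate. destruct Rlt_dec; nra.
Qed.

Lemma improve (K : nat) (T W zeta Pt Ip : R) (h f gam B : nat -> R)
  (tau phi e : nat -> R) :
  (1 <= K)%nat -> 0 < zeta -> 0 < Pt -> 0 < h 1%nat -> 0 < B 1%nat ->
  feasible K T zeta Pt Ip h f tau phi e ->
  exists tau', feasible K T zeta Pt Ip h f tau' phi e /\
    objective K W gam B tau phi e <= objective K W gam B tau' phi e /\
    e 1%nat = zeta * Pt * h 1%nat * tau' 0%nat.
Proof.
intros HK Hz HP Hh HB [Hs [H0 Hk]].
set (c := zeta * Pt * h 1%nat).
assert (Hc : 0 < c) by (unfold c; apply Rmult_lt_0_compat; [nra|lra]).
destruct (Hk 1%nat ltac:(lia)) as [Hp1 [Hpt1 [HtT1 [He1 [HE1 HI1]]]]].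
simpl in HE1. fold c in HE1.
set (t0 := e 1%nat / c).
set (tau' := fun i => match i with O => t0 | 1%nat => tau 1%nat + (tau 0%nat - t0) | _ => tau i end).
assert (Ht0 : 0 <= t0) by (unfold t0; unfold Rdiv; apply Rmult_le_pos; [lra| left; apply Rinv_0_lt_compat; lra]).
assert (Ht0' : t0 <= tau 0%nat).
{ unfold t0. apply (Rmult_le_reg_r c); [lra|]. field_simplify; lra. }
assert (Hps : forall n, (2 <= n)%nat -> psum tau' n = psum tau n).
{ intros n Hn. induction Hn as [|n Hn IH].
  - simpl. unfold tau'. lra.
  - simpl. rewrite IH. unfold tau'. destruct n as [|[|n]]; [lia|lia|reflexivity]. }
exists tau'. split; [|split].
- split; [rewrite Hps by lia; exact Hs|]. split; [unfold tau'; simpl; lra|].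
  intros k Hk'. destruct (Hk k Hk') as [A1 [A2 [A3 [A4 [A5 A6]]]]].
  destruct k as [|[|k]]; [lia| |].
  + simpl. unfold tau'. simpl.
    assert (tau 0%nat + tau 1%nat <= T).
    { assert (psum tau 2 <= psum tau (S K)).
      { apply psum_mono; [|lia]. intros i Hi. destruct i as [|i]; [lra|].
        destruct (Hk (S i) ltac:(lia)) as [B1 [B2 _]]; lra. }
      assert (psum tau 2 = tau 0%nat + tau 1%nat) by (simpl; lra). lra. }
    repeat split; try lra. fold c. unfold t0. right. field. lra.
  + rewrite Hps by lia. unfold tau'. repeat split; assumption.
- unfold objective. apply minR1_mono; [exact HK|]. intros k Hk'.
  destruct k as [|[|k]]; [lia| |].
  + apply rate_mono_tau; [exact HB|]. unfold tau'. lra.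
  + unfold tau'. lra.
- unfold tau'. unfold t0. fold c. field. lra.
Qed.

Lemma rate_eq W g Bk tau phi r :
  0 <= phi -> 0 <= r -> 0 < g ->
  rate W g Bk tau phi (r * phi) =
  tau * Bk + phi * (W * (ln (1 + Rabs (r * g)) / ln 2) - Bk).
Proof.
intros Hp Hr Hg. rewrite (Rabs_right (r * g)) by nra.
unfold rate, log2. destruct (Rlt_dec 0 phi) as [Hp'|Hp'].
- replace (r * phi / phi * g) with (r * g) by (field; lra). ring.
- assert (phi = 0) by lra. subst phi. ring.
Qed.

Definition rof (phi e : R) : R := if Rlt_dec 0 phi then e / phi else 0.

Lemma feas_r (phi e : R) (c : R) :
  0 <= phi -> 0 <= e -> e <= c * phi -> 0 < c ->
  0 <= rof phi e /\ rof phi e <= c /\ e = rof phi e * phi.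
Proof.
intros Hp He Hc Hc0. unfold rof. destruct (Rlt_dec 0 phi) as [Hp'|Hp'].
- split; [|split].
  + unfold Rdiv. apply Rmult_le_pos; [lra| left; apply Rinv_0_lt_compat; lra].
  + apply (Rmult_le_reg_r phi); [lra|]. unfold Rdiv. rewrite Rmult_assoc, Rinv_l by lra. lra.
  + field. lra.
- assert (phi = 0) by lra. subst phi. repeat split; lra.
Qed.

Module MC.
From mathcomp Require Import all_boot all_order all_algebra.
From mathcomp Require Import all_classical all_reals all_analysis.
From mathcomp Require Import Rstruct Rstruct_topology.
From mathcomp Require Import zify.
Import Order.TTheory GRing.Theory Num.Theory.



Open Scope R_scope.
Definition mone : R := -1.
Definition half : R := / 2.

Section Top.
Local Open Scope ring_scope.
Local Open Scope classical_set_scope.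

Lemma contD' {T : topologicalType} (f g : T -> R) :
  continuous f -> continuous g -> continuous (fun x => Rplus (f x) (g x)).
Proof. move=> cf cg x; exact: (@continuousD R R^o T f g x (cf x) (cg x)). Qed.

Lemma contM' {T : topologicalType} (f g : T -> R) :
  continuous f -> continuous g -> continuous (fun x => Rmult (f x) (g x)).
Proof. move=> cf cg x; exact: (@continuousM R T f g x (cf x) (cg x)). Qed.

Lemma contC' {T : topologicalType} (c : R) : continuous (fun _ : T => c).
Proof. exact: cst_continuous. Qed.

Lemma contComp' {T : topologicalType} (f : T -> R) (h : R -> R) (P : R -> Prop) :
  continuous f -> (forall x, P (f x)) -> (forall y, P y -> continuity_pt h y) ->
  continuous (fun x => h (f x)).
Proof.
move=> cf Pf ch x. apply: continuous_comp; first exact: cf.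
by apply/continuity_pt_cvg; apply: ch.
Qed.

Lemma contMin' {T : topologicalType} (f g : T -> R) :
  continuous f -> continuous g -> continuous (fun x => Rmin (f x) (g x)).
Proof.
move=> cf cg.
have -> : (fun x => Rmin (f x) (g x)) =
   (fun x => Rmult (Rplus (Rplus (f x) (g x)) (Rmult mone (Rabs (Rplus (f x) (Rmult mone (g x)))))) half).
  apply: boolp.funext => y /=. rewrite /Rmin; case: Rle_dec => H.
  - rewrite Rabs_left1; unfold mone, half; lra; lra.
  - rewrite Rabs_right; unfold mone, half; lra; lra.
have habs : forall y, True -> continuity_pt Rabs y by move=> y _; exact: Rcontinuity_abs.
have c1 := contM' _ g (contC' mone) cg.
have c2 := contD' f _ cf c1.
have c3 := contComp' _ Rabs (fun _ => True) c2 (fun _ => I) habs.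
have c4 := contM' _ _ (contC' mone) c3.
apply: contM'; last exact: contC'.
apply: contD' => //. exact: contD'.
Qed.


Lemma closed_le' {T : topologicalType} (a b : T -> R) :
  continuous a -> continuous b -> closed [set v | Rle (a v) (b v)].
Proof.
move=> ca cb.
have -> : [set v | Rle (a v) (b v)] =
   (fun v => Rplus (b v) (Rmult mone (a v))) @^-1` [set x : R | (0 <= x)%R].
  apply/seteqP; split => v /=.
  - move=> H; apply/RleP; rewrite /mone -R0E; lra.
  - move/RleP; rewrite /mone -R0E; lra.
have c1 : continuous (fun v => Rplus (b v) (Rmult mone (a v))).
  apply: contD' => //; apply: contM' => //; exact: contC'.
move/continuous_closedP: c1; apply; exact: closed_ge.
Qed.

Lemma psum_cont {T : topologicalType} (F : T -> nat -> R) n :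
  (forall i, continuous (fun v => F v i)) -> continuous (fun v => psum (F v) n).
Proof.
move=> cF; elim: n => [|n IH] /=; first exact: contC'.
exact: contD'.
Qed.

Lemma minR1_cont {T : topologicalType} (F : T -> nat -> R) n :
  (forall i, continuous (fun v => F v i)) -> continuous (fun v => minR1 (F v) n).
Proof.
move=> cF; elim: n => [|n IH]; first exact: cF.
case: n IH => [|m] IH; first exact: cF.
change (continuous (fun v => Rmin (minR1 (F v) m.+1) (F v m.+2))).
exact: contMin'.
Qed.

Lemma ln1abs_cont {T : topologicalType} (u : T -> R) :
  continuous u -> continuous (fun v => Rpower.ln (Rplus 1 (Rabs (u v)))).
Proof.
move=> cu.
apply: (contComp' u (fun y => Rpower.ln (Rplus 1 (Rabs y))) (fun _ => True)) => // y _.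
have Hy : Rlt 0 (Rplus 1 (Rabs y)) by have := Rabs_pos y; lra.
change (continuity_pt (comp Rpower.ln (fun y => Rplus 1 (Rabs y))) y).
apply: (continuity_pt_comp (fun y => Rplus 1 (Rabs y)) Rpower.ln).
  apply: continuity_pt_plus; first exact: continuity_pt_const.
  exact: Rcontinuity_abs.
apply: derivable_continuous_pt.
exists (/ (Rplus 1 (Rabs y))); exact: derivable_pt_lim_ln.
Qed.

Definition crd {n} (v : 'rV[R]_n.+1) (j : nat) : R := v ord0 (inord j).

Lemma crd_cont n j : continuous (fun v : 'rV[R]_n.+1 => crd v j).
Proof. exact: coord_continuous. Qed.

End Top.

Local Open Scope classical_set_scope.
Local Open Scope R_scope.

Definition N3 (K : nat) := (3 * K + 2)%nat.

Definition Gk (K : nat) (W : R) (gam B : nat -> R) (v : 'rV[R]_(N3 K).+1) (k : nat) : R :=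
  crd v k * B k + crd v (K + 1 + k) *
   (W * (Rpower.ln (1 + Rabs (crd v (2 * K + 2 + k) * gam k)) / Rpower.ln 2) - B k).

Definition G (K : nat) (W : R) (gam B : nat -> R) (v : 'rV[R]_(N3 K).+1) : R :=
  minR1 (Gk K W gam B v) K.

Definition condk (K : nat) (T zeta Pt Ip : R) (h f : nat -> R) (k : nat)
  : set 'rV[R]_(N3 K).+1 :=
  (([set v | crd v (K + 1 + k) <= crd v k] `&` [set v | crd v k <= T]) `&`
   [set v | crd v (2 * K + 2 + k) <= Ip / f k]) `&`
   [set v | crd v (2 * K + 2 + k) * crd v (K + 1 + k) <= zeta * Pt * h k * psum (crd v) k].

Definition Cset (K : nat) (T zeta Pt Ip : R) (h f : nat -> R) : set 'rV[R]_(N3 K).+1 :=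
  [set v | psum (crd v) (S K) <= T] `&`
  \bigcap_(k in [set k | (1 <= k <= K)%nat]) condk K T zeta Pt Ip h f k.

Section Top2.
Local Open Scope ring_scope.

Definition boxS (K : nat) (M : R) : set 'rV[R]_(N3 K).+1 :=
  [set v | forall i, (`[0, M]%classic : set R) (v ord0 i)].

Lemma Gk_cont K W gam B k : continuous (fun v => Gk K W gam B v k).
Proof.
rewrite /Gk /Rdiv /Rminus.
apply: contD'; first by apply: contM'; [exact: crd_cont| exact: contC'].
apply: contM'; first exact: crd_cont.
apply: contD'; last exact: contC'.
apply: contM'; first exact: contC'.
apply: contM'; last exact: contC'.
apply: ln1abs_cont. apply: contM'; [exact: crd_cont| exact: contC'].
Qed.

Lemma G_cont K W gam B : continuous (G K W gam B).
Proof. apply: minR1_cont => i; exact: Gk_cont. Qed.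

Lemma Cset_closed K T zeta Pt Ip h f : closed (Cset K T zeta Pt Ip h f).
Proof.
apply: closedI.
  apply: closed_le'; [apply: psum_cont => i; exact: crd_cont| exact: contC'].
apply: closed_bigI => k _.
apply: closedI; first apply: closedI; first apply: closedI.
- apply: closed_le'; exact: crd_cont.
- apply: closed_le'; [exact: crd_cont | exact: contC'].
- apply: closed_le'; [exact: crd_cont | exact: contC'].
- apply: closed_le'; first by apply: contM'; exact: crd_cont.
  apply: contM'; first exact: contC'.
  apply: psum_cont => i; exact: crd_cont.
Qed.

Lemma psum_zero n : psum (fun _ => 0%coqR) n = 0%coqR.
Proof. elim: n => [|n IH] //=; rewrite IH; lra. Qed.

Lemma exists_max K T W zeta Pt Ip h f gam B (M : R) :
  (0 <= M)%coqR -> (0 <= T)%coqR -> (0 <= Ip)%coqR -> (forall k, (1 <= k <= K)%N -> (0 < f k)%coqR) ->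
  exists2 c, (boxS K M `&` Cset K T zeta Pt Ip h f) c &
    forall v, (boxS K M `&` Cset K T zeta Pt Ip h f) v ->
      (G K W gam B v <= G K W gam B c)%coqR.
Proof.
move=> HM HT HI Hf.
set A := boxS K M `&` Cset K T zeta Pt Ip h f.
have A0 : A 0.
  have c0 : forall j, crd (0 : 'rV[R]_(N3 K).+1) j = 0%coqR by move=> j; rewrite /crd mxE.
  split.
    move=> i; rewrite mxE /= in_itv /=; apply/andP; split => //.
    by apply/RleP.
  split.
    change (psum (crd (0 : 'rV[R]_(N3 K).+1)) K.+1 <= T)%coqR.
    by rewrite (psum_ext _ (fun _ => 0%coqR)) ?psum_zero // => i _; rewrite c0.
  move=> k /= [/andP[Hk1 Hk2]]; rewrite /condk /= !c0.
  rewrite (psum_ext _ (fun _ => 0%coqR)) ?psum_zero; last by move=> i _; rewrite c0.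
  have := Hf k; rewrite Hk1 Hk2 => /(_ isT) Hfk.
  split; [split; [split|]|]; try lra.
  rewrite /Rdiv; apply: Rmult_le_pos; [lra| left; exact: Rinv_0_lt_compat].
have cA : compact A.
  apply: compact_closedI; last exact: Cset_closed.
  apply: (@rV_compact _ _ (fun _ => `[0, M]%classic)) => _.
  exact: segment_compact.
have cG : {within A, continuous (G K W gam B)}.
  by apply: continuous_subspaceT; exact: G_cont.
have [c cin cmax] := compact_EVT_max (ex_intro _ 0 A0) cA cG.
exists c; first by rewrite -in_setE.
move=> v Av; apply/RleP; apply: cmax; by rewrite in_setE.
Qed.

End Top2.



Lemma exists_opt K T W zeta Pt Ip h f gam B :
  (1 <= K)%coq_nat -> (0 < T)%coqR -> (0 < Ip)%coqR ->
  (forall k, (1 <= k)%coq_nat /\ (k <= K)%coq_nat ->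
     0 < h k /\ 0 < f k /\ 0 < gam k /\ 0 < B k) ->
  exists tau phi e, optimal K T W zeta Pt Ip h f gam B tau phi e.
Proof.
move=> HK HT HI Hp.
have Hf : forall k, (1 <= k <= K)%N -> 0 < f k.
  move=> k /andP[/ssrnat.leP H1 /ssrnat.leP H2]; have := Hp k (conj H1 H2); tauto.
set M := T + psum (fun k => Rabs (Ip / f k)) K.+1.
have Hps0 : 0 <= psum (fun k => Rabs (Ip / f k)) K.+1.
  apply: psum_nonneg => i _; exact: Rabs_pos.
have HM : 0 <= M by rewrite /M; lra.
have HTM : T <= M by rewrite /M; lra.
have HIM : forall k, (1 <= k)%coq_nat /\ (k <= K)%coq_nat -> Ip / f k <= M.
  move=> k Hk.
  have H1 : Rabs (Ip / f k) <= psum (fun k => Rabs (Ip / f k)) K.+1.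
    apply: psum_ge_term; [move=> i _; exact: Rabs_pos | apply/ssrnat.ltP; apply/ssrnat.ltP; lia].
  have := Rle_abs (Ip / f k); rewrite /M; lra.
have [c [Bc [Cs Ck]] Hc] := exists_max K T W zeta Pt Ip h f gam B M HM (Rlt_le _ _ HT) (Rlt_le _ _ HI) Hf.
have Bnn : forall v, boxS K M v -> forall j, 0 <= crd v j.
  move=> v Bv j; have := Bv (inord j); rewrite /= in_itv /= => /andP[/RleP H _]; exact: H.
have Ckk : forall k, (1 <= k)%coq_nat /\ (k <= K)%coq_nat -> condk K T zeta Pt Ip h f k c.
  move=> k [H1 H2]; apply: Ck; rewrite /=; apply/andP; split; apply/ssrnat.leP; lia.
set tau0 := crd c.
set phi0 := fun k => crd c (K + 1 + k).
set e0 := fun k => crd c (2 * K + 2 + k) * crd c (K + 1 + k).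
have objG : forall v, boxS K M v ->
    objective K W gam B (crd v) (fun k => crd v (K + 1 + k))
      (fun k => crd v (2 * K + 2 + k) * crd v (K + 1 + k)) = G K W gam B v.
  move=> v Bv; rewrite /objective /G; apply: minR1_ext => // k Hk.
  rewrite rate_eq; [reflexivity | exact: Bnn | exact: Bnn | ].
  have := Hp k Hk; tauto.
exists tau0, phi0, e0; split.
- split; first exact: Cs.
  split; first exact: Bnn.
  move=> k Hk; have [[[c1 c2] c3] c4] := Ckk k Hk.
  have := Hp k Hk => -[_ [Hfk _]].
  have Hr := Bnn c Bc (2 * K + 2 + k)%nat.
  have Hph := Bnn c Bc (K + 1 + k)%nat.
  rewrite /phi0 /e0 /tau0.
  split; first exact: Hph.
  split; first exact: c1.
  split; first exact: c2.
  split; first exact: Rmult_le_pos.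
  split; first exact: c4.
  exact: Rmult_le_compat_r.
- move=> tau' phi' e' Hf'.
  have [Hs' [H0' Hk']] := Hf'.
  pose vo := fun j : nat =>
    if Nat.leb j K then tau' j
    else if Nat.leb j (2 * K + 1)%nat then
      (if Nat.eqb j (K + 1)%nat then 0 else phi' (j - (K + 1))%nat)
    else (if Nat.eqb j (2 * K + 2)%nat then 0
          else rof (phi' (j - (2 * K + 2))%nat) (e' (j - (2 * K + 2))%nat)).
  pose v' := (\row_(j < (N3 K).+1) vo (nat_of_ord j))%R : 'rV[R]_(N3 K).+1.
  have crdv : forall j, (j <= N3 K)%coq_nat -> crd v' j = vo j.
    move=> j Hj; rewrite /crd mxE inordK //; apply/ssrnat.ltP; lia.
  have Ctau : forall i, (i <= K)%coq_nat -> crd v' i = tau' i.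
    move=> i Hi; rewrite crdv; last by rewrite /N3; lia.
    rewrite /vo; case: (Nat.leb_spec i K) => H //; lia.
  have Cphi : forall k, (1 <= k)%coq_nat /\ (k <= K)%coq_nat ->
      crd v' (K + 1 + k) = phi' k.
    move=> k Hk; rewrite crdv; last by rewrite /N3; lia.
    rewrite /vo; case: (Nat.leb_spec (K + 1 + k) K) => H1; first lia.
    case: (Nat.leb_spec (K + 1 + k) (2 * K + 1)) => H2; last lia.
    case: (Nat.eqb_spec (K + 1 + k) (K + 1)) => H3; first lia.
    congr (phi' _); lia.
  have Cr : forall k, (1 <= k)%coq_nat /\ (k <= K)%coq_nat ->
      crd v' (2 * K + 2 + k) = rof (phi' k) (e' k).
    move=> k Hk; rewrite crdv; last by rewrite /N3; lia.
    rewrite /vo; case: (Nat.leb_spec (2 * K + 2 + k) K) => H1; first lia.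
    case: (Nat.leb_spec (2 * K + 2 + k) (2 * K + 1)) => H2; first lia.
    case: (Nat.eqb_spec (2 * K + 2 + k) (2 * K + 2)) => H3; first lia.
    have -> : (2 * K + 2 + k - (2 * K + 2))%nat = k by lia.
    by [].
  have Hnn : forall i, (i < K.+1)%coq_nat -> 0 <= tau' i.
    move=> i Hi; case: i Hi => [|i] Hi; first exact: H0'.
    have [a1 [a2 _]] := Hk' i.+1 (conj (le_n_S 0 i (Nat.le_0_l i)) (le_S_n _ _ Hi)).
    lra.
  have HtauT : forall i, (i < K.+1)%coq_nat -> tau' i <= T.
    move=> i Hi; apply: Rle_trans Hs'; apply: psum_ge_term => //.
  have Hr : forall k, (1 <= k)%coq_nat /\ (k <= K)%coq_nat ->
      0 <= rof (phi' k) (e' k) /\ rof (phi' k) (e' k) <= Ip / f k /\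
      e' k = rof (phi' k) (e' k) * phi' k.
    move=> k Hk; have [a1 [a2 [a3 [a4 [a5 a6]]]]] := Hk' k Hk.
    apply: feas_r => //.
    have := Hp k Hk => -[_ [Hfk _]].
    rewrite /Rdiv; apply: Rmult_lt_0_compat => //; exact: Rinv_0_lt_compat.
  have Bv' : boxS K M v'.
    move=> [j Hj]; rewrite mxE /= in_itv /=; apply/andP; split; apply/RleP;
      move/ssrnat.ltP: Hj; rewrite /N3 => Hi;
      rewrite /vo;
      (case: (Nat.leb_spec j K) => H1;
       [ | case: (Nat.leb_spec j (2 * K + 1)) => H2;
           [ case: (Nat.eqb_spec j (K + 1)) => H3
           | case: (Nat.eqb_spec j (2 * K + 2)) => H3 ]]); rewrite -?R0E; try lra.
    + apply: Hnn; lia.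
    + have Hk : (1 <= j - (K + 1))%coq_nat /\ (j - (K + 1) <= K)%coq_nat by lia.
      have [a1 _] := Hk' _ Hk; exact: a1.
    + have Hk : (1 <= j - (2 * K + 2))%coq_nat /\ (j - (2 * K + 2) <= K)%coq_nat by lia.
      have [a1 _] := Hr _ Hk; exact: a1.
    + apply: Rle_trans HTM; apply: HtauT; lia.
    + have Hk : (1 <= j - (K + 1))%coq_nat /\ (j - (K + 1) <= K)%coq_nat by lia.
      have [a1 [a2 [a3 _]]] := Hk' _ Hk.
      apply: Rle_trans HTM; lra.
    + have Hk : (1 <= j - (2 * K + 2))%coq_nat /\ (j - (2 * K + 2) <= K)%coq_nat by lia.
      have [_ [a2 _]] := Hr _ Hk.
      apply: Rle_trans (HIM _ Hk); exact: a2.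
  have psv : forall n, (n <= K.+1)%coq_nat -> psum (crd v') n = psum tau' n.
    move=> n Hn; apply: psum_ext => i Hi; apply: Ctau; lia.
  have Cv' : Cset K T zeta Pt Ip h f v'.
    split.
      change (psum (crd v') K.+1 <= T); rewrite psv; try lia; exact: Hs'.
    move=> k /= /andP[/ssrnat.leP H1 /ssrnat.leP H2].
    have Hk : (1 <= k)%coq_nat /\ (k <= K)%coq_nat by lia.
    have [a1 [a2 [a3 [a4 [a5 a6]]]]] := Hk' k Hk.
    have [r1 [r2 r3]] := Hr k Hk.
    rewrite /condk; split; [split; [split|]|] => /=.
    + by rewrite Cphi // Ctau //; lia.
    + by rewrite Ctau //; lia.
    + by rewrite Cr.
    + rewrite Cr // Cphi // psv; last lia.
      by rewrite -r3.
  have Gv' : objective K W gam B tau' phi' e' = G K W gam B v'.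
    rewrite -(objG v' Bv') /objective; apply: minR1_ext => // k Hk.
    have [_ [_ r3]] := Hr k Hk.
    rewrite Cr // Cphi // Ctau; last lia.
    by rewrite -r3.
  rewrite Gv'.
  have -> : objective K W gam B tau0 phi0 e0 = G K W gam B c by exact: objG.
  by apply: Hc; split.
Qed.

End MC.

Theorem lemma3 (K : nat) (T W zeta Pt Ip : R) (h f gam B : nat -> R) :
  (1 <= K)%nat -> 0 < T -> 0 < W -> 0 < zeta -> zeta <= 1 ->
  0 < Pt -> 0 < Ip ->
  (forall k : nat, (1 <= k <= K)%nat ->
     0 < h k /\ 0 < f k /\ 0 < gam k /\ 0 < B k) ->
  exists tau phi e : nat -> R,
    optimal K T W zeta Pt Ip h f gam B tau phi e /\
    e 1%nat = zeta * Pt * h 1%nat * tau 0%nat.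
Proof.
intros HK HT HW Hz Hz1 HP HI Hp.
destruct (MC.exists_opt K T W zeta Pt Ip h f gam B HK HT HI Hp) as [tau [phi [e [Hfe Hopt]]]].
destruct (Hp 1%nat ltac:(lia)) as [Hh1 [_ [_ HB1]]].
destruct (improve K T W zeta Pt Ip h f gam B tau phi e HK Hz HP Hh1 HB1 Hfe) as [tau' [Hf' [Hle He]]].
exists tau', phi, e. split; [split|]; auto.
intros t p q Hq. apply Rle_trans with (objective K W gam B tau phi e); auto.
Qed.
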